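(* Let $0<\Delta\le1$ and $T=\frac{\lambda_1}{\Delta}\ln\frac{1}{\Delta}$, and use the quantizer $q_r$ with variable-length encoding. There exist constants $C_2,C_3>0$, independent of $P$ and of the feedback rates (and of $\Delta$), such that for all $P>0$ $$\mathbb{E}[r_{\rm loss}]\le\log_2\Big(1+C_2P\,2^{-\min\{R_{r,{\rm VLE},1},R_{r,{\rm VLE},2}\}}\Big)\le C_3P\,2^{-\min\{R_{r,{\rm VLE},1},R_{r,{\rm VLE},2}\}}.$$
   Context: $H_1,H_2$ are independent exponential random variables with means $\lambda_1\ge\lambda_2>0$ (density $e^{-x/\lambda_i}/\lambda_i$, $x>0$); $P>0$ is the total power. For $a\ge b\ge0$ with $a>0$ let $A(a,b)=\frac{2b}{\sqrt{(a+b)^2+4ab^2P}+a+b}$. Full-CSI maximum minimum rate: $r_{\max}=\log_2(1+PH_1A(H_1,H_2))$ if $H_1\ge H_2$ and $r_{\max}=\log_2(1+PH_2A(H_2,H_1))$ if $H_1<H_2$. Quantizer with $\Delta>0$, $T\ge0$: $q_r(x)=\lfloor x/\Delta\rfloor\Delta$ for $x\le T\Delta$, $q_r(x)=T\Delta$ for $x>T\Delta$. Let $a_i=q_r(H_i)$; if $a_1\ge a_2$ let $(s,w)=(1,2)$, otherwise $(s,w)=(2,1)$. $\alpha_q=A(a_s,a_w)$ if $a_1,a_2>0$, else $\alpha_q=0$. Adapted rates: $r_{s,q}=\log_2(1+P\alpha_qa_s)$, $r_{w,q}=\log_2\big(1+\frac{Pa_w(1-\alpha_q)}{Pa_w\alpha_q+1}\big)$.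 Rate loss: $r_{\rm loss}=r_{\max}-\min\{r_{1,q},r_{2,q}\}$. Variable-length encoding: the quantization index $n$ (with $q_r(x)=n\Delta$) is sent with the $n$-th binary string in the list $0,1,00,01,10,11,000,\dots$, of length $\lfloor\log_2(n+2)\rfloor$. The feedback rate of Receiver $i$ is the expected codeword length $R_{r,{\rm VLE},i}=\mathbb{E}[\ell(H_i)]$, where $\ell(x)=\lfloor\log_2(\lfloor x/\Delta\rfloor+2)\rfloor$ for $x\le T\Delta$ and $\ell(x)=\lfloor\log_2(T+2)\rfloor$ for $x>T\Delta$. *)

(* Defs.v *)
From HB Require Import structures.
From mathcomp Require Import all_boot all_order all_algebra.
From mathcomp Require Import all_classical all_reals all_analysis.
Set Implicit Arguments. Unset Strict Implicit. Unset Printing Implicit Defensive.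
Import Order.TTheory GRing.Theory Num.Theory.
Local Open Scope ring_scope.
Local Open Scope classical_set_scope.

Section Defs.
Variable R : realType.

Definition log2 (x : R) : R := ln x / ln 2.

Definition Afun (P a b : R) : R :=
  2 * b / (Num.sqrt ((a + b) ^+ 2 + 4 * a * b ^+ 2 * P) + a + b).

Definition r_max (P h1 h2 : R) : R :=
  if h2 <= h1 then log2 (1 + P * h1 * Afun P h1 h2)
  else log2 (1 + P * h2 * Afun P h2 h1).

Definition q_r (Delta T x : R) : R :=
  if x <= T * Delta then (Num.floor (x / Delta))%:~R * Delta else T * Delta.

Definition r_min_q (P a1 a2 : R) : R :=
  let a_s := if a2 <= a1 then a1 else a2 in
  let a_w := if a2 <= a1 then a2 else a1 in
  let alpha := if (0 < a1) && (0 < a2) then Afun P a_s a_w else 0 in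
  let r_s := log2 (1 + P * alpha * a_s) in
  let r_w := log2 (1 + P * a_w * (1 - alpha) / (P * a_w * alpha + 1)) in
  Num.min r_s r_w.

Definition r_loss (P Delta T h1 h2 : R) : R :=
  r_max P h1 h2 - r_min_q P (q_r Delta T h1) (q_r Delta T h2).

Definition vle_len (Delta T x : R) : R :=
  if x <= T * Delta then (Num.floor (log2 ((Num.floor (x / Delta))%:~R + 2)))%:~R
  else (Num.floor (log2 (T + 2)))%:~R.

Definition exp_density (lam x : R) : R :=
  if 0 < x then expR (- (x / lam)) / lam else 0.

(* E[r_loss] with H1, H2 independent exponential (means lam1, lam2) *)
Definition E_rloss (lam1 lam2 P Delta T : R) : \bar R :=
  (\int[(@lebesgue_measure R) \x (@lebesgue_measure R)]_(h in [set: R * R])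
     (r_loss P Delta T h.1 h.2 * exp_density lam1 h.1 * exp_density lam2 h.2)%:E)%E.

Definition R_VLE (lam Delta T : R) : R :=
  Rintegral (@lebesgue_measure R) [set: R] (fun x => vle_len Delta T x * exp_density lam x).

End Defs.

(* Main.v *)
Require Import Defs.
Set Warnings "-all".
From HB Require Import structures.
From mathcomp Require Import all_boot all_order all_algebra.
From mathcomp Require Import all_classical all_reals all_analysis.
From mathcomp Require Import ring lra.
From mathcomp Require Import measurable_realfun exponential_distribution.
Import Order.TTheory GRing.Theory Num.Theory.
Local Open Scope ring_scope.
Local Open Scope classical_set_scope.
Section Alg.
Variable R : realType.
Implicit Types P a b s t : R.

Lemma Afun_eq P a b : 0 < P -> 0 < a -> 0 < b ->
  0 <= P * a * Afun P a b /\
  b * (P * a * Afun P a b) ^+ 2 + (a + b) * (P * a * Afun P a b) = P * a * b.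
Proof.
move=> P0 a0 b0; rewrite /Afun.
set E := (a + b) ^+ 2 + 4 * a * b ^+ 2 * P.
have E0 : 0 <= E by rewrite /E; apply: addr_ge0; [exact: sqr_ge0| ]; apply: mulr_ge0 => //; [|exact: ltW]; apply: mulr_ge0; [|exact: sqr_ge0]; apply: mulr_ge0 => //; exact: ltW.
set Q := Num.sqrt E.
have Q0 : 0 <= Q by exact: sqrtr_ge0.
have QQ : Q ^+ 2 = E by rewrite sqr_sqrtr.
have D0 : 0 < Q + a + b by lra.
split.
  apply: mulr_ge0; first by apply: mulr_ge0; exact: ltW.
  by apply: divr_ge0; [lra| exact: ltW].
have Dn : Q + a + b != 0 by rewrite gt_eqF.
have b2 : 2 * b != 0 by rewrite mulf_neq0 // gt_eqF.
have key : (Q - (a + b)) * (Q + a + b) = 4 * a * b ^+ 2 * P.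
  have -> : (Q - (a + b)) * (Q + a + b) = Q ^+ 2 - (a + b) ^+ 2 by ring.
  by rewrite QQ /E; ring.
have Hs : P * a * (2 * b / (Q + a + b)) = (Q - (a + b)) / (2 * b).
  rewrite mulrA; apply/eqP; rewrite eqr_div //; apply/eqP.
  rewrite mulrC key; ring.
rewrite Hs.
apply: (@mulIf _ (4 * b)); first by rewrite mulf_neq0 // gt_eqF.
have E1 : (Q - (a + b)) / (2 * b) * (2 * b) = Q - (a + b) by rewrite divfK.
have -> : (b * ((Q - (a + b)) / (2 * b)) ^+ 2 + (a + b) * ((Q - (a + b)) / (2 * b))) * (4 * b)
   = ((Q - (a + b)) / (2 * b) * (2 * b)) ^+ 2 + 2 * (a + b) * ((Q - (a + b)) / (2 * b) * (2 * b)).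
  by rewrite expr2; ring.
rewrite E1.
have -> : (Q - (a + b)) ^+ 2 + 2 * (a + b) * (Q - (a + b)) = Q ^+ 2 - (a + b) ^+ 2 by ring.
rewrite QQ /E; ring.
Qed.

Lemma root_le P a b s t : 0 < a -> 0 < b -> 0 <= s -> 0 <= t ->
  b * s ^+ 2 + (a + b) * s = P * a * b ->
  P * a * b <= b * t ^+ 2 + (a + b) * t -> s <= t.
Proof.
move=> a0 b0 s0 t0 Hs Ht; rewrite leNgt; apply/negP => ts.
have h1 : b * t ^+ 2 <= b * s ^+ 2.
  by rewrite ler_pM2l // lerXn2r // ?nnegrE // ltW.
have h2 : (a + b) * t < (a + b) * s by rewrite ltr_pM2l //; lra.
lra.
Qed.

Lemma root_ub P a b s : 0 < a -> 0 < b -> 0 <= s ->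
  b * s ^+ 2 + (a + b) * s = P * a * b -> s <= P * b /\ s ^+ 2 + s <= P * a.
Proof.
move=> a0 b0 s0 Hs; split.
  have : a * s <= a * (P * b).
    have : 0 <= b * s ^+ 2 + b * s by apply: addr_ge0; apply: mulr_ge0 => //; [exact: ltW|exact: sqr_ge0|exact: ltW].
    have Hs' : a * s = P * a * b - b * s ^+ 2 - b * s by rewrite -Hs; ring.
    have E2 : P * a * b = a * (P * b) by ring.
    rewrite Hs' E2; lra.
  by rewrite ler_pM2l.
have : b * (s ^+ 2 + s) <= b * (P * a).
  have : 0 <= a * s by apply: mulr_ge0 => //; exact: ltW.
  have Hs' : b * (s ^+ 2 + s) = P * a * b - a * s by rewrite -Hs; ring.
  have E2 : P * a * b = b * (P * a) by ring.
  rewrite Hs' E2; lra.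
by rewrite ler_pM2l.
Qed.
End Alg.
Section Alg2.
Variable R : realType.
Implicit Types P a b s t : R.
Lemma cmp_root P u w u0 w0 s0 D : 0 < P -> 0 < u -> 0 < w -> 0 < u0 -> 0 < w0 ->
  0 <= s0 -> w0 * s0 ^+ 2 + (u0 + w0) * s0 = P * u0 * w0 ->
  0 <= D -> u <= u0 + D -> w <= w0 + D ->
  P * u * w <= w * (s0 + P * D) ^+ 2 + (u + w) * (s0 + P * D).
Proof.
move=> P0 u0' w0' u00 w00 s00 Hs D0 hu hw.
set t := s0 + P * D.
have PD0 : 0 <= P * D by apply: mulr_ge0 => //; exact: ltW.
have ub1 : s0 <= P * w0.
  have : u0 * s0 <= u0 * (P * w0).
    have Hs' : u0 * s0 = P * u0 * w0 - w0 * s0 ^+ 2 - w0 * s0 by rewrite -Hs; ring.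
    have E2 : P * u0 * w0 = u0 * (P * w0) by ring.
    have : 0 <= w0 * s0 ^+ 2 by apply: mulr_ge0; [exact: ltW| exact: sqr_ge0].
    have : 0 <= w0 * s0 by apply: mulr_ge0; [exact: ltW| done].
    rewrite Hs' E2; lra.
  by rewrite ler_pM2l.
have ub2 : s0 ^+ 2 + s0 <= P * u0.
  have : w0 * (s0 ^+ 2 + s0) <= w0 * (P * u0).
    have Hs' : w0 * (s0 ^+ 2 + s0) = P * u0 * w0 - u0 * s0 by rewrite -Hs; ring.
    have E2 : P * u0 * w0 = w0 * (P * u0) by ring.
    have : 0 <= u0 * s0 by apply: mulr_ge0; [exact: ltW| done].
    rewrite Hs' E2; lra.
  by rewrite ler_pM2l.
have A1 : (s0 ^+ 2 + s0) * (u0 + D) <= (t ^+ 2 + t) * u0.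
  have e1 : t ^+ 2 + t = (s0 ^+ 2 + s0) + P * D * (2 * s0 + P * D + 1) by rewrite /t; ring.
  have h1 : P * D <= P * D * (2 * s0 + P * D + 1).
    rewrite -{1}[P * D]mulr1 ler_wpM2l //; lra.
  have h2 : (s0 ^+ 2 + s0) * D <= P * u0 * D by rewrite ler_wpM2r.
  have h3 : P * u0 * D <= P * D * (2 * s0 + P * D + 1) * u0.
    have -> : P * u0 * D = P * D * u0 by ring.
    by rewrite ler_wpM2r // ltW.
  rewrite e1 mulrDl mulrDr; lra.
have A2 : s0 * (w0 + D) <= t * w0.
  have h2 : s0 * D <= P * w0 * D by rewrite ler_wpM2r.
  rewrite /t mulrDl mulrDr; have -> : P * D * w0 = P * w0 * D by ring. lra.
have t0 : 0 <= t by rewrite /t; lra.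
have X0 : 0 <= t ^+ 2 + t by apply: addr_ge0 => //; exact: sqr_ge0.
have sq0 : 0 <= s0 ^+ 2 + s0 by apply: addr_ge0 => //; exact: sqr_ge0.
have B1 : w0 * w * (s0 ^+ 2 + s0) * u <= w0 * w * ((t ^+ 2 + t) * u0).
  apply: (le_trans (y := w0 * w * ((s0 ^+ 2 + s0) * (u0 + D)))).
    rewrite -mulrA ler_wpM2l //; first by apply: mulr_ge0; exact: ltW.
    by rewrite ler_wpM2l.
  rewrite ler_wpM2l //; by apply: mulr_ge0; exact: ltW.
have B2 : u0 * u * s0 * w <= u0 * u * (t * w0).
  apply: (le_trans (y := u0 * u * (s0 * (w0 + D)))).
    rewrite -mulrA ler_wpM2l //; first by apply: mulr_ge0; exact: ltW.
    by rewrite ler_wpM2l.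
  rewrite ler_wpM2l //; by apply: mulr_ge0; exact: ltW.
have uw : 0 < u0 * w0 by apply: mulr_gt0.
rewrite -(ler_pM2l uw).
have -> : u0 * w0 * (P * u * w) = u * w * (w0 * (s0 ^+ 2 + s0) + u0 * s0).
  have -> : w0 * (s0 ^+ 2 + s0) + u0 * s0 = P * u0 * w0 by rewrite -Hs; ring.
  ring.
have -> : u * w * (w0 * (s0 ^+ 2 + s0) + u0 * s0) = w0 * w * (s0 ^+ 2 + s0) * u + u0 * u * s0 * w by ring.
have -> : u0 * w0 * (w * t ^+ 2 + (u + w) * t) = w0 * w * ((t ^+ 2 + t) * u0) + u0 * u * (t * w0) by ring.
exact: lerD.
Qed.
End Alg2.
Arguments Afun_eq {R P a b}.
Arguments root_le {R P a b s t}.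
Arguments root_ub {R P a b s}.
Arguments cmp_root {R P u w u0 w0 s0 D}.
Section Loss.
Variable R : realType.
Implicit Types P a b s t x y : R.

Lemma ln2_gt0 : 0 < ln (2 : R).
Proof. by apply: ln_gt0; lra. Qed.

Lemma log2_le x y : 0 < x -> x <= y -> log2 x <= log2 y.
Proof.
move=> x0 xy; rewrite /log2 ler_pM2r ?invr_gt0 ?ln2_gt0 //.
by rewrite ler_ln // posrE; lra.
Qed.

Lemma log2M x y : 0 < x -> 0 < y -> log2 (x * y) = log2 x + log2 y.
Proof. by move=> x0 y0; rewrite /log2 lnM ?posrE // mulrDl. Qed.

Lemma log2_1 : log2 (1 : R) = 0.
Proof. by rewrite /log2 ln1 mul0r. Qed.

Lemma loss_pt P h1 h2 a1 a2 : 0 < P -> 0 < h1 -> 0 < h2 -> 0 <= a1 -> a1 <= h1 ->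
  0 <= a2 -> a2 <= h2 ->
  r_max P h1 h2 - r_min_q P a1 a2 <= log2 (1 + P * ((h1 - a1) + (h2 - a2))).
Proof.
move=> P0 h10 h20 a10 a1h a20 a2h.
set D := (h1 - a1) + (h2 - a2).
have D0 : 0 <= D by rewrite /D; lra.
have PD0 : 0 <= P * D by apply: mulr_ge0 => //; exact: ltW.
pose u := if h2 <= h1 then h1 else h2.
pose w := if h2 <= h1 then h2 else h1.
have u0' : 0 < u by rewrite /u; case: ifP.
have w0' : 0 < w by rewrite /w; case: ifP.
have -> : r_max P h1 h2 = log2 (1 + P * u * Afun P u w) by rewrite /r_max /u /w; case: ifP.
have [sh0 shE] := Afun_eq P0 u0' w0'.
set sh := P * u * Afun P u w in sh0 shE *.
have [shw _] := root_ub u0' w0' sh0 shE.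
case: (boolP ((0 < a1) && (0 < a2))) => [/andP[a1p a2p] | nap].
  pose u0 := if a2 <= a1 then a1 else a2.
  pose w0 := if a2 <= a1 then a2 else a1.
  have u00 : 0 < u0 by rewrite /u0; case: ifP.
  have w00 : 0 < w0 by rewrite /w0; case: ifP.
  have [s00 s0E] := Afun_eq P0 u00 w00.
  set s0 := P * u0 * Afun P u0 w0 in s00 s0E.
  have -> : r_min_q P a1 a2 = log2 (1 + s0).
    rewrite /r_min_q /= a1p a2p /=.
    rewrite -/u0 -/w0.
    set al := Afun P u0 w0.
    have e1 : P * al * u0 = s0 by rewrite /s0 -/al; ring.
    have e2 : P * w0 * (1 - al) / (P * w0 * al + 1) = s0.
      have dn : P * w0 * al + 1 != 0.
        apply: lt0r_neq0; have : 0 <= P * w0 * al.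
          have -> : P * w0 * al = w0 / u0 * s0 by rewrite /s0 -/al; field; rewrite gt_eqF.
          apply: mulr_ge0 => //; apply: divr_ge0; exact: ltW.
        lra.
      apply: (mulIf dn); rewrite divfK //.
      apply: (@mulIf _ u0); first by rewrite gt_eqF.
      have : w0 * s0 ^+ 2 + (u0 + w0) * s0 - P * u0 * w0 = 0 by rewrite s0E subrr.
      rewrite /s0 -/al => H.
      apply/eqP; rewrite -subr_eq0; apply/eqP; rewrite -[RHS](oppr0) -H; ring.
    by rewrite e1 e2 minxx.
  have hu : u <= u0 + D by rewrite /u /u0 /D; do 2 case: ifP; lra.
  have hw : w <= w0 + D by rewrite /w /w0 /D; do 2 case: ifP; lra.
  have le1 : sh <= s0 + P * D.
    apply: (root_le u0' w0' sh0 (t := s0 + P * D) _ shE).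
      by apply: addr_ge0.
    exact: (cmp_root P0 u0' w0' u00 w00 s00 s0E D0 hu hw).
  have -> : log2 (1 + P * D) = log2 (1 + s0 + P * D) - log2 (1 + s0) + (log2 ((1 + s0) * (1 + P * D)) - log2 (1 + s0 + P * D)).
    rewrite log2M; [ring | lra | lra].
  have : log2 (1 + s0 + P * D) <= log2 ((1 + s0) * (1 + P * D)).
    apply: log2_le; first lra.
    have : 0 <= s0 * (P * D) by exact: mulr_ge0.
    rewrite mulrDl !mulrDr !mul1r mulr1; lra.
  have : log2 (1 + sh) <= log2 (1 + s0 + P * D) by apply: log2_le; lra.
  lra.
have -> : r_min_q P a1 a2 = 0.
  rewrite /r_min_q /= (negbTE nap).
  have -> : (if a2 <= a1 then a2 else a1) = 0.
    move: nap; rewrite negb_and -!leNgt => /orP[] h; case: ifP; lra.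
  by rewrite !mulr0 !mul0r !addr0 log2_1 minxx.
rewrite subr0; apply: log2_le; first lra.
have hwD : w <= D.
  move: nap; rewrite negb_and -!leNgt /w /D => /orP[] h; case: ifP; lra.
have : P * w <= P * D by rewrite ler_pM2l.
lra.
Qed.
End Loss.
Section Integ.
Variable R : realType.
Local Notation mu := (@lebesgue_measure R).

Lemma le_int_nm d (T : measurableType d) (m : {measure set T -> \bar R}) (f g : T -> \bar R) :
  (forall x, (0 <= g x)%E) -> (forall x, (f x <= g x)%E) ->
  (\int[m]_x f x <= \int[m]_x g x)%E.
Proof.
move=> g0 fg.
rewrite integralE.
apply: (@le_trans _ _ (\int[m]_x (f^\+ x) - 0)%E).
  apply: leeB => //; apply: integral_ge0 => x _; exact: funeneg_ge0.
rewrite sube0.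
rewrite [X in (X <= _)%E]ge0_integralTE; last by move=> x; exact: funepos_ge0.
rewrite ge0_integralTE //.
apply: ereal_sup_le; move=> _ [h /= hf <-]; exists h => //= x.
apply: (le_trans (hf x)).
by rewrite funeposE ge_max fg g0.
Qed.

Lemma prod_int (phi psi : R -> R) (J : R) :
  (forall x, 0 <= phi x) -> (forall x, 0 <= psi x) ->
  measurable_fun setT phi -> measurable_fun setT psi ->
  (\int[mu]_y (psi y)%:E = J%:E)%E ->
  (\int[mu \x mu]_z (phi z.1 * psi z.2)%:E = \int[mu]_x (phi x)%:E * J%:E)%E.
Proof.
move=> phi0 psi0 mphi mpsi hJ.
have mf : measurable_fun setT (EFin \o (fun z : R * R => phi z.1 * psi z.2)).
  apply/measurable_EFinP.
  apply: measurable_funM.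
    exact: (measurableT_comp mphi measurable_fst).
  exact: (measurableT_comp mpsi measurable_snd).
rewrite [LHS](_ : _ = \int[mu \x mu]_z (EFin \o (fun z : R * R => (phi z.1 * psi z.2)%R)) z)%E //.
rewrite (@fubini_tonelli1 _ _ _ _ _ mu mu _ mf); last by move=> z; rewrite lee_fin mulr_ge0.
rewrite /fubini_F /=.
have J0 : 0 <= J by rewrite -lee_fin -hJ; apply: integral_ge0 => x _; rewrite lee_fin.
transitivity (\int[mu]_x ((phi x)%:E * J%:E))%E.
  apply: eq_integral => x _.
  under eq_integral do rewrite EFinM.
  rewrite ge0_integralZl_EFin //; first by congr (_ * _)%E; exact: hJ.
  - by move=> y _; rewrite lee_fin.
  - exact/measurable_EFinP.
apply: ge0_integralZr => //; last by move=> x _; rewrite lee_fin.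
exact/measurable_EFinP.
Qed.
End Integ.
Section Tail.
Variable R : realType.
Local Notation mu := (@lebesgue_measure R).

Lemma tail_pt (c l x : R) : 0 <= c -> 0 < l -> c <= x ->
  (x - c) * (l^-1 * expR (- l^-1 * x)) <=
  4 * l * expR (- (c / (2 * l))) * ((2 * l)^-1 * expR (- (2 * l)^-1 * x)).
Proof.
move=> c0 l0 cx.
have l0' : l != 0 by rewrite gt_eqF.
set y := (x - c) / l.
have y0 : 0 <= y by rewrite /y divr_ge0 //; [lra | exact: ltW].
set A := - ((x + c) / (2 * l)).
have e1 : expR (- l^-1 * x) = expR A * expR (- (y / 2)).
  by rewrite -expRD /A /y; congr expR; field.
have e2 : expR (- (c / (2 * l))) * expR (- (2 * l)^-1 * x) = expR A.
  by rewrite -expRD /A; congr expR; field.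
have -> : (x - c) * (l^-1 * expR (- l^-1 * x)) = y * expR (- (y / 2)) * expR A.
  by rewrite e1 /y; field.
have -> : 4 * l * expR (- (c / (2 * l))) * ((2 * l)^-1 * expR (- (2 * l)^-1 * x)) = 2 * expR A.
  by rewrite -e2; field.
rewrite ler_pM2r ?expR_gt0 //.
rewrite expRN ler_pdivrMr ?expR_gt0 //.
have := expR_ge1Dx (y / 2); lra.
Qed.

Lemma mmax (c : R) : measurable_fun setT (fun x : R => Num.max (x - c) 0).
Proof.
apply: (measurable_maxr (f := fun x : R => x - c) (g := fun=> (0:R))).
  apply: (measurable_funB (f := id) (g := fun=> c)) => //.
exact: measurable_cst.
Qed.

Lemma pdf_ge0 (l x : R) : 0 < l -> 0 <= exponential_pdf l^-1 x.
Proof. by move=> l0; apply: exponential_pdf_ge0; rewrite invr_ge0 ltW. Qed.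

Lemma mF (c l : R) : measurable_fun setT (fun x : R => Num.max (x - c) 0 * exponential_pdf l^-1 x).
Proof. exact: (measurable_funM (mmax c) (measurable_exponential_pdf _)). Qed.

Lemma F_le (c l x : R) : 0 <= c -> 0 < l ->
  Num.max (x - c) 0 * exponential_pdf l^-1 x <=
  4 * l * expR (- (c / (2 * l))) * exponential_pdf (2 * l)^-1 x.
Proof.
move=> c0 l0.
have K0 : 0 <= 4 * l * expR (- (c / (2 * l))).
  by apply: mulr_ge0; [apply: mulr_ge0; lra | exact: expR_ge0].
have R0 : 0 <= 4 * l * expR (- (c / (2 * l))) * exponential_pdf (2 * l)^-1 x.
  by apply: mulr_ge0 => //; apply: pdf_ge0; lra.
case: (ltP x c) => xc.
  have -> : Num.max (x - c) 0 = 0 by apply/max_idPr; lra.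
  by rewrite mul0r.
have -> : Num.max (x - c) 0 = x - c by apply/max_idPl; lra.
rewrite !exponential_pdfE /=; try lra.
exact: tail_pt.
Qed.

Lemma pdf_tail (r c : R) : 0 < r -> 0 < c ->
  (\int[mu]_(x in ~` `[0%R, c]) (exponential_pdf r x)%:E = (expR (- r * c))%:E)%E.
Proof.
move=> r0 c0.
have := integral_exponential_pdf r0.
rewrite -(setUv `[0, c]%classic) ge0_integral_setU //=; last 4 first.
- exact: measurableC.
- by rewrite setUv; apply/measurable_EFinP; exact: measurable_exponential_pdf.
- by move=> x _; rewrite lee_fin exponential_pdf_ge0 // ltW.
- exact/disj_setPCl.
have := exponential_prob_itv0c r c0; rewrite /exponential_prob => ->.
case: (\int[mu]_(x in ~` `[0%R, c]) (exponential_pdf r x)%:E)%E => [t| |] //=.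
move=> /eqP; rewrite -EFinD eqe => /eqP H; congr EFin; lra.
Qed.

Lemma tail_int (c l : R) : 0 <= c -> 0 < l ->
  (\int[mu]_x ((Num.max (x - c) 0 * exponential_pdf l^-1 x)%:E) <= (4 * l * expR (- (c / l)))%:E)%E.
Proof.
move=> c0 l0.
set K := 4 * l * expR (- (c / (2 * l))).
have K0 : 0 <= K by apply: mulr_ge0; [apply: mulr_ge0; lra | exact: expR_ge0].
have r20 : 0 < (2 * l)^-1 by rewrite invr_gt0; lra.
have mEF : measurable_fun setT (EFin \o (fun x : R => Num.max (x - c) 0 * exponential_pdf l^-1 x)).
  apply/measurable_EFinP; exact: mF.
have mG : measurable_fun setT (EFin \o (fun x : R => K * exponential_pdf (2 * l)^-1 x)).
  apply/measurable_EFinP; exact: (measurable_funM (measurable_cst K) (measurable_exponential_pdf _)).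
have F0 x : 0 <= Num.max (x - c) 0 * exponential_pdf l^-1 x.
  by apply: mulr_ge0; [rewrite le_max lexx orbT | exact: pdf_ge0].
have G0 x : 0 <= K * exponential_pdf (2 * l)^-1 x.
  by apply: mulr_ge0 => //; apply: pdf_ge0; lra.
have intG (D : set R) : measurable D ->
   (\int[mu]_(x in D) ((K * exponential_pdf (2 * l)^-1 x)%:E) =
    K%:E * \int[mu]_(x in D) (exponential_pdf (2 * l)^-1 x)%:E)%E.
  move=> mD; under eq_integral do rewrite EFinM.
  rewrite ge0_integralZl_EFin //.
  - by move=> x _; rewrite lee_fin; apply: pdf_ge0; lra.
  - apply/measurable_EFinP; apply: measurable_funS (measurable_exponential_pdf _) => //.
move: c0; rewrite le_eqVlt => /orP[/eqP c0 | cpos].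
  rewrite -c0 in K K0 F0 G0 mEF mG intG *.
  apply: (le_trans (y := (\int[mu]_x ((K * exponential_pdf (2 * l)^-1 x)%:E))%E)).
    apply: ge0_le_integral => //.
    - by move=> x _; rewrite lee_fin.
    - by move=> x _; rewrite lee_fin; apply: F_le => //; lra.
  rewrite intG // integral_exponential_pdf // mule1 lee_fin /K.
  by rewrite !mul0r !oppr0 expR0.
rewrite -(setUv `[0, c]%classic) ge0_integral_setU //=; last 4 first.
- exact: measurableC.
- by rewrite setUv.
- by move=> x _; rewrite lee_fin.
- exact/disj_setPCl.
rewrite integral0_eq ?add0e; last first.
  move=> x; rewrite /= in_itv /= => /andP[_ xc].
  have -> : Num.max (x - c) 0 = 0 by apply/max_idPr; lra.
  by rewrite mul0r.
apply: (le_trans (y := (\int[mu]_(x in ~` `[0%R, c]) ((K * exponential_pdf (2 * l)^-1 x)%:E))%E)).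
  apply: ge0_le_integral => //.
  - exact: measurableC.
  - by move=> x _; rewrite lee_fin.
  - exact: measurable_funS mEF.
  - exact: measurable_funS mG.
  - by move=> x _; rewrite lee_fin; apply: F_le => //; lra.
rewrite intG; last exact: measurableC.
rewrite pdf_tail // -EFinM lee_fin /K -!mulrA; rewrite ler_pM2l //; rewrite ler_pM2l //.
rewrite -expRD.
have -> : - (c / (2 * l)) + - (2 * l)^-1 * c = - (c / l) by field; lra.
by [].
Qed.
End Tail.
Section VLE.
Variable R : realType.
Local Notation mu := (@lebesgue_measure R).

Lemma ln2_gt0' : 0 < ln (2 : R).
Proof. by apply: ln_gt0; lra. Qed.

Lemma log2_le' (x y : R) : 0 < x -> x <= y -> log2 x <= log2 y.
Proof.
move=> x0 xy; rewrite /log2 ler_pM2r ?invr_gt0 ?ln2_gt0' //.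
by rewrite ler_ln // posrE; lra.
Qed.

Lemma ln_sub_le (u v : R) : 0 < u -> 0 < v -> ln u <= ln v + (u - v) / v.
Proof.
move=> u0 v0.
set w := (u - v) / v.
have hu : u = v * (1 + w) by rewrite /w; field; rewrite gt_eqF.
have w1 : -1 < w.
  have : 0 < u / v by exact: divr_gt0.
  have -> : u / v = 1 + w by rewrite /w; field; rewrite gt_eqF.
  lra.
rewrite {1}hu lnM ?posrE //; last lra.
by rewrite lerD2l; apply: le_ln1Dx.
Qed.

Lemma fine_le_b (x : \bar R) (b : R) : 0 <= b -> (x <= b%:E)%E -> fine x <= b.
Proof. by move=> b0; case: x => [t| |] //=; rewrite lee_fin. Qed.

Lemma dens_eq (l x : R) : 0 < l -> exp_density l x = if 0 < x then exponential_pdf l^-1 x else 0.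
Proof.
move=> l0; rewrite /exp_density; case: ifP => // x0.
rewrite exponential_pdfE /=; last exact: ltW.
by rewrite mulrC mulNr [l^-1 * x]mulrC.
Qed.

Lemma vle_pt (D T x : R) : 0 < D -> 0 <= T -> 0 < x -> vle_len D T x <= log2 (x / D + 2).
Proof.
move=> D0 T0 x0; rewrite /vle_len.
have xD0 : 0 <= x / D by rewrite divr_ge0 // ltW.
case: ifP => hx.
  apply: (le_trans (floor_le _)); apply: log2_le'.
    have : 0 <= (Num.floor (x / D))%:~R :> R by rewrite ler0z floor_ge0.
    lra.
  by rewrite lerD2r floor_le.
apply: (le_trans (floor_le _)); apply: log2_le'; first lra.
rewrite lerD2r.
move/negbT: hx; rewrite -ltNge => hx.
by rewrite ler_pdivlMr // ltW.
Qed.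
End VLE.
Arguments ln2_gt0 {R}.
Arguments log2_le {R}.
Arguments log2M {R}.
Arguments log2_1 {R}.
Arguments loss_pt {R}.
Arguments le_int_nm {R}.
Arguments prod_int {R}.
Arguments tail_pt {R}.
Arguments mmax {R}.
Arguments pdf_ge0 {R}.
Arguments mF {R}.
Arguments F_le {R}.
Arguments pdf_tail {R}.
Arguments tail_int {R}.
Arguments ln2_gt0' {R}.
Arguments log2_le' {R}.
Arguments ln_sub_le {R}.
Arguments fine_le_b {R}.
Arguments dens_eq {R}.
Arguments vle_pt {R}.
Section Final.
Variable R : realType.
Local Notation mu := (@lebesgue_measure R).

Lemma log2_tan (l D x : R) : 0 < l -> 0 < D -> 0 <= x ->
  log2 (x / D + 2) <= log2 (l / D + 2) + ((l + 2 * D) * ln 2)^-1 * x.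
Proof.
move=> l0 D0 x0.
have ln20 := @ln2_gt0 R.
have xD : 0 <= x / D by rewrite divr_ge0 // ltW.
have lD : 0 <= l / D by rewrite divr_ge0 // ltW.
have u0 : 0 < x / D + 2 by lra.
have v0 : 0 < l / D + 2 by lra.
have H := ln_sub_le _ _ u0 v0.
have e : (x / D + 2 - (l / D + 2)) / (l / D + 2) = (x - l) / (l + 2 * D).
  by field; apply/andP; split; rewrite gt_eqF //; lra.
rewrite e in H.
rewrite /log2.
have -> : ((l + 2 * D) * ln 2)^-1 * x = x / (l + 2 * D) / ln 2.
  by field; apply/andP; split; rewrite gt_eqF //; lra.
rewrite -mulrDl ler_pM2r ?invr_gt0 //.
apply: (le_trans H); rewrite lerD2l ler_pM2r ?invr_gt0; lra.
Qed.

Lemma log2_ge0 (y : R) : 1 <= y -> 0 <= log2 y.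
Proof. by move=> y1; rewrite /log2; apply: divr_ge0; [exact: ln_ge0 | exact: ltW (ln2_gt0)]. Qed.

Lemma int_lin (a b c l : R) : 0 <= a -> 0 <= b -> 0 <= c -> 0 < l ->
  (\int[mu]_x ((a * exponential_pdf l^-1 x + b * (Num.max (x - c) 0 * exponential_pdf l^-1 x))%:E)
   <= (a + b * (4 * l * expR (- (c / l))))%:E)%E.
Proof.
move=> a0 b0 c0 l0.
under eq_integral do rewrite EFinD.
rewrite ge0_integralD //; last 4 first.
- by move=> x _; rewrite lee_fin mulr_ge0 // pdf_ge0.
- apply/measurable_EFinP; exact: (measurable_funM (measurable_cst a) (measurable_exponential_pdf _)).
- by move=> x _; rewrite lee_fin mulr_ge0 // mulr_ge0 ?pdf_ge0 // le_max lexx orbT.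
- apply/measurable_EFinP; exact: (measurable_funM (measurable_cst b) (mF c l)).
under eq_integral do rewrite EFinM.
rewrite ge0_integralZl_EFin //; last 2 first.
- by move=> x _; rewrite lee_fin pdf_ge0.
- apply/measurable_EFinP; exact: measurable_exponential_pdf.
rewrite integral_exponential_pdf ?invr_gt0 // mule1.
under eq_integral do rewrite EFinM.
rewrite ge0_integralZl_EFin //; last 2 first.
- by move=> x _; rewrite lee_fin mulr_ge0 ?pdf_ge0 // le_max lexx orbT.
- apply/measurable_EFinP; exact: mF.
rewrite EFinD leeD2l // EFinM.
by apply: lee_wpmul2l; [rewrite lee_fin | exact: tail_int].
Qed.

Lemma RVLE_le (l D T : R) : 0 < l -> 0 < D -> 0 <= T ->
  R_VLE l D T <= log2 (l / D + 2) + 4 / ln 2.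
Proof.
move=> l0 D0 T0.
have ln20 := @ln2_gt0 R.
set a := log2 (l / D + 2).
set k := ((l + 2 * D) * ln 2)^-1.
have lD : 0 <= l / D by rewrite divr_ge0 // ltW.
have a0 : 0 <= a by apply: log2_ge0; lra.
have k0 : 0 <= k by rewrite /k invr_ge0 mulr_ge0 // ltW //; lra.
rewrite /R_VLE /Rintegral.
apply: (le_trans (y := a + k * (4 * l * expR (- (0 / l))))).
  apply: fine_le_b.
    by apply: addr_ge0 => //; apply: mulr_ge0 => //; apply: mulr_ge0; [lra | exact: expR_ge0].
  apply: (le_trans _ (int_lin a k 0 l a0 k0 (lexx 0) l0)).
  apply: le_int_nm => x.
    rewrite lee_fin; apply: addr_ge0; apply: mulr_ge0 => //; first exact: pdf_ge0.
    by apply: mulr_ge0; [rewrite le_max lexx orbT | exact: pdf_ge0].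
  rewrite lee_fin dens_eq //; case: ifP => x0; last first.
    rewrite mulr0; apply: addr_ge0; apply: mulr_ge0 => //; first exact: pdf_ge0.
    by apply: mulr_ge0; [rewrite le_max lexx orbT | exact: pdf_ge0].
  have -> : Num.max (x - 0) 0 = x by rewrite subr0; apply/max_idPl; exact: ltW.
  have -> : a * exponential_pdf l^-1 x + k * (x * exponential_pdf l^-1 x) = (a + k * x) * exponential_pdf l^-1 x by ring.
  apply: ler_wpM2r; first exact: pdf_ge0.
  apply: (le_trans (vle_pt D T x D0 T0 x0)).
  by apply: log2_tan => //; exact: ltW.
rewrite lerD2l mul0r oppr0 expR0 mulr1 /k.
have h : 4 * l / (l + 2 * D) <= 4 by rewrite ler_pdivrMr; lra.
have -> : ((l + 2 * D) * ln 2)^-1 * (4 * l) = 4 * l / (l + 2 * D) / ln 2.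
  by field; apply/andP; split; rewrite gt_eqF //; lra.
by rewrite ler_pM2r ?invr_gt0.
Qed.
End Final.
Arguments log2_tan {R}.
Arguments log2_ge0 {R}.
Arguments int_lin {R}.
Arguments RVLE_le {R}.
Section Final2.
Variable R : realType.
Local Notation mu := (@lebesgue_measure R).

Lemma meas_prod (phi psi : R -> R) :
  measurable_fun setT phi -> measurable_fun setT psi ->
  measurable_fun setT (EFin \o (fun z : R * R => phi z.1 * psi z.2)).
Proof.
move=> mphi mpsi; apply/measurable_EFinP.
apply: measurable_funM.
  exact: (measurableT_comp mphi measurable_fst).
exact: (measurableT_comp mpsi measurable_snd).
Qed.

Lemma fin_int (f : R -> R) (b : R) :
  (forall x, 0 <= f x) -> (\int[mu]_x (f x)%:E <= b%:E)%E ->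
  exists2 J : R, (\int[mu]_x (f x)%:E = J%:E)%E & J <= b.
Proof.
move=> f0; have : (0 <= \int[mu]_x (f x)%:E)%E by apply: integral_ge0 => x _; rewrite lee_fin.
case: (\int[mu]_x (f x)%:E)%E => [t| |] //= _ H.
by exists t.
Qed.

Lemma intB (c l1 l2 K1 k : R) : 0 <= c -> 0 < l1 -> 0 < l2 -> 0 <= K1 -> 0 <= k ->
  (\int[mu \x mu]_z
     ((K1 * exponential_pdf l1^-1 z.1 + k * (Num.max (z.1 - c) 0 * exponential_pdf l1^-1 z.1))
         * exponential_pdf l2^-1 z.2
      + (k * exponential_pdf l1^-1 z.1) * (Num.max (z.2 - c) 0 * exponential_pdf l2^-1 z.2))%:E
   <= (K1 + k * (4 * l1 * expR (- (c / l1))) + k * (4 * l2 * expR (- (c / l2))))%:E)%E.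
Proof.
move=> c0 l10 l20 K10 k0.
have t0 (l x : R) : 0 < l -> 0 <= Num.max (x - c) 0 * exponential_pdf l^-1 x.
  by move=> l0; apply: mulr_ge0; [rewrite le_max lexx orbT | exact: pdf_ge0].
have mp (l : R) : measurable_fun setT (exponential_pdf l^-1) := measurable_exponential_pdf _.
have mK : measurable_fun setT (fun x : R => K1 * exponential_pdf l1^-1 x + k * (Num.max (x - c) 0 * exponential_pdf l1^-1 x)).
  apply: measurable_funD.
    exact: (measurable_funM (measurable_cst K1) (mp l1)).
  exact: (measurable_funM (measurable_cst k) (mF c l1)).
have mk2 : measurable_fun setT (fun x : R => k * exponential_pdf l1^-1 x) := measurable_funM (measurable_cst k) (mp l1).
have mt2 : measurable_fun setT (fun x : R => Num.max (x - c) 0 * exponential_pdf l2^-1 x) := mF c l2.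
have A0 x : 0 <= K1 * exponential_pdf l1^-1 x + k * (Num.max (x - c) 0 * exponential_pdf l1^-1 x).
  by rewrite addr_ge0 // mulr_ge0 // ?pdf_ge0 ?t0.
under eq_integral do rewrite EFinD.
rewrite ge0_integralD //; last 4 first.
- by move=> z _; rewrite lee_fin mulr_ge0 // pdf_ge0.
- exact: (meas_prod _ _ mK (mp l2)).
- by move=> z _; rewrite lee_fin; apply: mulr_ge0; [apply: mulr_ge0 => //; exact: pdf_ge0 | exact: t0].
- exact: (meas_prod _ _ mk2 mt2).
have i1 : (\int[mu]_x (exponential_pdf l2^-1 x)%:E = 1%:E)%E.
  by apply: integral_exponential_pdf; rewrite invr_gt0.
rewrite (prod_int _ (exponential_pdf l2^-1) 1 A0) //; last by move=> x; rewrite pdf_ge0.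
have [J hJ Jle] := fin_int _ _ (fun x => t0 l2 x l20) (tail_int c l2 c0 l20).
rewrite (prod_int (fun x => k * exponential_pdf l1^-1 x) (fun x => Num.max (x - c) 0 * exponential_pdf l2^-1 x) J) //; last 2 first.
- by move=> x; rewrite mulr_ge0 // pdf_ge0.
- by move=> x; exact: t0.
rewrite mule1.
have h1 := int_lin K1 k c l1 K10 k0 c0 l10.
have h2 : (\int[mu]_x (k * exponential_pdf l1^-1 x)%:E = k%:E)%E.
  under eq_integral do rewrite EFinM.
  rewrite ge0_integralZl_EFin //; last 2 first.
  - by move=> x _; rewrite lee_fin pdf_ge0.
  - apply/measurable_EFinP; exact: measurable_exponential_pdf.
  by rewrite integral_exponential_pdf ?invr_gt0 // mule1.
rewrite h2 -EFinM EFinD; apply: leeD => //.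
by rewrite lee_fin ler_wpM2l.
Qed.
End Final2.
Arguments meas_prod {R}.
Arguments fin_int {R}.
Arguments intB {R}.
Section Final3.
Variable R : realType.

Lemma q_r_pt (D T h : R) : 0 < D -> 0 <= T -> 0 < h ->
  [/\ 0 <= q_r D T h, q_r D T h <= h & h - q_r D T h <= D + Num.max (h - T * D) 0].
Proof.
move=> D0 T0 h0; rewrite /q_r.
have TD0 : 0 <= T * D by rewrite mulr_ge0 // ltW.
have hD0 : 0 <= h / D by rewrite divr_ge0 // ltW.
case: ifP => hT.
  have f0 : 0 <= (Num.floor (h / D))%:~R :> R by rewrite ler0z floor_ge0.
  have fl : (Num.floor (h / D))%:~R <= h / D :> R by exact: floor_le.
  have fg : h / D < (Num.floor (h / D))%:~R + 1 :> R.
    by have := floorD1_gt (h / D); rewrite intrD.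
  have e : h = h / D * D by rewrite divfK // gt_eqF.
  split.
  - by rewrite mulr_ge0 // ltW.
  - by rewrite {2}e ler_pM2r.
  - have : h < ((Num.floor (h / D))%:~R + 1) * D by rewrite {1}e ltr_pM2r.
    have : 0 <= Num.max (h - T * D) 0 by rewrite le_max lexx orbT.
    rewrite mulrDl mul1r; lra.
move/negbT: hT; rewrite -ltNge => hT.
split => //; first exact: ltW.
have -> : Num.max (h - T * D) 0 = h - T * D by apply/max_idPl; lra.
lra.
Qed.

Lemma log2_tangent (P g m : R) : 0 < P -> 0 <= g -> 0 <= m ->
  log2 (1 + P * g) <= log2 (1 + P * m) + P / ((1 + P * m) * ln 2) * (g - m).
Proof.
move=> P0 g0 m0.
have ln20 := @ln2_gt0 R.
have Pg : 0 <= P * g by rewrite mulr_ge0 // ltW.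
have Pm : 0 <= P * m by rewrite mulr_ge0 // ltW.
have H := ln_sub_le (1 + P * g) (1 + P * m) ltac:(lra) ltac:(lra).
rewrite /log2.
have -> : P / ((1 + P * m) * ln 2) * (g - m) = (1 + P * g - (1 + P * m)) / (1 + P * m) / ln 2.
  by field; apply/andP; split; rewrite gt_eqF //; lra.
by rewrite -mulrDl ler_pM2r ?invr_gt0.
Qed.
End Final3.
Arguments q_r_pt {R}.
Arguments log2_tangent {R}.
Local Open Scope classical_set_scope.
Section Main.
Variable R : realType.
Local Notation mu := (@lebesgue_measure R).

Lemma main_int (lam1 lam2 P D T : R) : 0 < lam2 -> lam2 <= lam1 -> 0 < D -> 0 < P -> 0 <= T ->
  expR (- (T * D / lam1)) <= D -> expR (- (T * D / lam2)) <= D ->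
  (E_rloss lam1 lam2 P D T <= (log2 (1 + P * ((2 + 4 * lam1 + 4 * lam2) * D)))%:E)%E.
Proof.
move=> l20 l21 D0 P0 T0 e1 e2.
have l10 : 0 < lam1 by lra.
have ln20 := @ln2_gt0 R.
set c := T * D.
have c0 : 0 <= c by rewrite /c mulr_ge0 // ltW.
set m := (2 + 4 * lam1 + 4 * lam2) * D.
have m0 : 0 <= m by rewrite /m mulr_ge0 // ltW //; lra.
have Pm : 0 <= P * m by rewrite mulr_ge0 // ltW.
set k := P / ((1 + P * m) * ln 2).
have k0 : 0 <= k by rewrite /k divr_ge0 ?ltW // mulr_gt0 //; lra.
set K0 := log2 (1 + P * m) - k * m.
have K00 : 0 <= K0.
  have := log2_tangent P 0 m P0 (lexx 0) m0.
  rewrite mulr0 addr0 log2_1 /K0 -/k; lra.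
set K1 := K0 + k * (2 * D).
have K10 : 0 <= K1 by rewrite /K1 addr_ge0 // mulr_ge0 // mulr_ge0 // ltW.
have t0 (l x : R) : 0 < l -> 0 <= Num.max (x - c) 0 * exponential_pdf l^-1 x.
  by move=> l0; apply: mulr_ge0; [rewrite le_max lexx orbT | exact: pdf_ge0].
rewrite /E_rloss.
apply: le_trans; last first.
  apply: le_trans; first exact: (intB c lam1 lam2 K1 k c0 l10 l20 K10 k0).
  rewrite lee_fin /K1.
  have h1 : k * (4 * lam1 * expR (- (c / lam1))) <= k * (4 * lam1 * D).
    by rewrite ler_wpM2l // ler_wpM2l // mulr_ge0 //; lra.
  have h2 : k * (4 * lam2 * expR (- (c / lam2))) <= k * (4 * lam2 * D).
    by rewrite ler_wpM2l // ler_wpM2l // mulr_ge0 //; lra.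
  have -> : log2 (1 + P * m) = K0 + k * m by rewrite /K0; ring.
  have -> : k * m = k * (2 * D) + k * (4 * lam1 * D) + k * (4 * lam2 * D) by rewrite /m; ring.
  lra.
apply: le_int_nm => z.
  rewrite lee_fin; apply: addr_ge0.
    apply: mulr_ge0; last exact: pdf_ge0.
    by apply: addr_ge0; apply: mulr_ge0 => //; [exact: pdf_ge0 | exact: t0].
  by apply: mulr_ge0; [apply: mulr_ge0 => //; exact: pdf_ge0 | exact: t0].
have RHS0 : 0 <= (K1 * exponential_pdf lam1^-1 z.1 + k * (Num.max (z.1 - c) 0 * exponential_pdf lam1^-1 z.1)) *
    exponential_pdf lam2^-1 z.2 + k * exponential_pdf lam1^-1 z.1 * (Num.max (z.2 - c) 0 * exponential_pdf lam2^-1 z.2).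
  apply: addr_ge0.
    apply: mulr_ge0; last exact: pdf_ge0.
    by apply: addr_ge0; apply: mulr_ge0 => //; [exact: pdf_ge0 | exact: t0].
  by apply: mulr_ge0; [apply: mulr_ge0 => //; exact: pdf_ge0 | exact: t0].
rewrite lee_fin !dens_eq //.
case: ifP => h1; last by rewrite mulr0 mul0r.
case: ifP => h2; last by rewrite mulr0.
have [qa1 qb1 qc1] := q_r_pt D T z.1 D0 T0 h1.
have [qa2 qb2 qc2] := q_r_pt D T z.2 D0 T0 h2.
have L := loss_pt P z.1 z.2 (q_r D T z.1) (q_r D T z.2) P0 h1 h2 qa1 qb1 qa2 qb2.
set Phi := 2 * D + Num.max (z.1 - c) 0 + Num.max (z.2 - c) 0.
have Phi0 : 0 <= Phi.
  have : 0 <= Num.max (z.1 - c) 0 by rewrite le_max lexx orbT.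
  have : 0 <= Num.max (z.2 - c) 0 by rewrite le_max lexx orbT.
  rewrite /Phi; lra.
have L2 : log2 (1 + P * ((z.1 - q_r D T z.1) + (z.2 - q_r D T z.2))) <= log2 (1 + P * Phi).
  apply: log2_le.
    have : 0 <= P * ((z.1 - q_r D T z.1) + (z.2 - q_r D T z.2)) by apply: mulr_ge0; [exact: ltW | lra].
    lra.
  rewrite lerD2l ler_pM2l //; rewrite /Phi -/c in qc1 qc2 *; lra.
have L3 := log2_tangent P Phi m P0 Phi0 m0.
have Lr : r_loss P D T z.1 z.2 <= K0 + k * Phi.
  rewrite /r_loss; rewrite /K0 -/k in L3 *; lra.
have -> : (K1 * exponential_pdf lam1^-1 z.1 + k * (Num.max (z.1 - c) 0 * exponential_pdf lam1^-1 z.1)) *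
    exponential_pdf lam2^-1 z.2 + k * exponential_pdf lam1^-1 z.1 * (Num.max (z.2 - c) 0 * exponential_pdf lam2^-1 z.2)
   = (K0 + k * Phi) * exponential_pdf lam1^-1 z.1 * exponential_pdf lam2^-1 z.2 by rewrite /K1 /Phi; ring.
rewrite ler_wpM2r ?pdf_ge0 // ler_wpM2r ?pdf_ge0 //.
Qed.
End Main.

Local Close Scope classical_set_scope.
Theorem theorem2 (R : realType) (lam1 lam2 : R) :
  0 < lam2 -> lam2 <= lam1 ->
  exists C2 C3 : R, 0 < C2 /\ 0 < C3 /\
    forall Delta P : R, 0 < Delta -> Delta <= 1 -> 0 < P ->
      let T := lam1 / Delta * ln (1 / Delta) in
      let Rmin := Num.min (R_VLE lam1 Delta T) (R_VLE lam2 Delta T) in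
      (E_rloss lam1 lam2 P Delta T <= (log2 (1 + C2 * P * 2 `^ (- Rmin)))%:E)%E /\
      log2 (1 + C2 * P * 2 `^ (- Rmin)) <= C3 * P * 2 `^ (- Rmin).
Proof.
move=> l20 l21.
have l10 : 0 < lam1 by lra.
have ln20 := @ln2_gt0 R.
set M := 2 + 4 * lam1 + 4 * lam2.
have M0 : 0 < M by rewrite /M; lra.
set C2 := M * (lam1 + 2) * expR 4.
have C20 : 0 < C2 by rewrite /C2 mulr_gt0 ?expR_gt0 // mulr_gt0 //; lra.
exists C2, (C2 / ln 2); split => //; split; first by rewrite divr_gt0.
move=> D P D0 D1 P0 T Rmin.
have lnD : 0 <= ln (1 / D) by apply: ln_ge0; rewrite ler_pdivlMr // mul1r.
have T0 : 0 <= T by rewrite /T mulr_ge0 // divr_ge0 // ltW.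
have hc : T * D = lam1 * ln (1 / D) by rewrite /T; field; rewrite gt_eqF.
have lnDe : ln (1 / D) = - ln D by rewrite div1r lnV // posrE.
have ei (l : R) : 0 < l -> l <= lam1 -> expR (- (T * D / l)) <= D.
  move=> l0 ll.
  have H : ln (1 / D) <= lam1 * ln (1 / D) / l.
    rewrite ler_pdivlMr // mulrC ler_wpM2r //.
  rewrite -{2}(@lnK R D) ?posrE // ler_expR hc; rewrite lnDe in H *; lra.
have MI := main_int _ lam1 lam2 P D T l20 l21 D0 P0 T0 (ei lam1 l10 (lexx _)) (ei lam2 l20 l21).
set y := 2 `^ (- Rmin).
set v := lam1 / D + 2.
have lD : 0 <= lam1 / D by rewrite divr_ge0 // ltW.
have v0 : 0 < v by rewrite /v; lra.
have R1 : Rmin <= log2 v + 4 / ln 2.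
  apply: (le_trans (y := R_VLE lam1 D T)); first by rewrite /Rmin ge_min lexx.
  exact: RVLE_le.
have Y1 : expR (- ln v - 4) <= y.
  rewrite /y /powR (negbTE (_ : (2:R) != 0)); last by rewrite pnatr_eq0.
  rewrite ler_expR.
  have := ler_wpM2r (ltW ln20) R1.
  rewrite mulrDl /log2 !divfK ?gt_eqF //.
  lra.
have Y2 : expR (- ln v - 4) = v^-1 * expR (-4) by rewrite expRD expRN lnK // posrE.
have y0 : 0 <= y by exact: powR_ge0.
have Hy : M * D <= C2 * y.
  apply: (le_trans (y := C2 * (v^-1 * expR (-4)))); last by rewrite -Y2; apply: ler_wpM2l => //; exact: ltW.
  have -> : C2 * (v^-1 * expR (-4)) = M * (lam1 + 2) / v.
    have e4 : expR 4 * expR (-4) = 1 :> R by rewrite -expRD subrr expR0.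
    transitivity (M * (lam1 + 2) / v * (expR 4 * expR (-4))); first by rewrite /C2; ring.
    by rewrite e4 mulr1.
  rewrite ler_pdivlMr //.
  have -> : M * D * v = M * (lam1 + 2 * D) by rewrite /v; field; rewrite gt_eqF.
  apply: ler_wpM2l; [exact: ltW | lra].
split.
  apply: (le_trans MI); rewrite lee_fin; apply: log2_le.
    have : 0 <= P * (M * D) by apply: mulr_ge0; [exact: ltW | apply: mulr_ge0; exact: ltW].
    rewrite -/M; lra.
  rewrite lerD2l -/M.
  have -> : C2 * P * y = P * (C2 * y) by ring.
  by rewrite ler_wpM2l // ltW.
have z0 : 0 <= C2 * P * y by apply: mulr_ge0 => //; apply: mulr_ge0; exact: ltW.
rewrite /log2.
have -> : C2 / ln 2 * P * y = C2 * P * y / ln 2 by field; rewrite gt_eqF.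
rewrite ler_pM2r ?invr_gt0 //.
apply: le_ln1Dx; lra.
Qed.
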